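(* Let $p>0$ and let $(u_n)_{n\ge0}$ be a sequence in $E^1$ with partial sums $s_n=\sum_{k=0}^n u_k$. If the series $\sum u_n$ converges to $\nu\in E^1$ (i.e. $D(s_n,\nu)\to0$), then $\sum u_n$ is $E_p$ summable to $\nu$, i.e. $D\big(\frac{1}{(p+1)^n}\sum_{k=0}^n\binom{n}{k}p^{n-k}s_k,\nu\big)\to0$.
   Context: $E^1$ denotes the set of fuzzy numbers: functions $u:\mathbb{R}\to[0,1]$ that are normal, fuzzy convex, upper semicontinuous, and have compact support $\overline{\{t:u(t)>0\}}$. For $\alpha\in(0,1]$ the $\alpha$-level set is $[u]_\alpha=\{t:u(t)\ge\alpha\}$ and $[u]_0=\overline{\{t:u(t)>0\}}$; each is a compact interval $[u^-_\alpha,u^+_\alpha]$. Addition and scalar multiplication are defined levelwise: $[u+v]_\alpha=[u^-_\alpha+v^-_\alpha,u^+_\alpha+v^+_\alpha]$ and $[ku]_\alpha=k[u]_\alpha$ for $k\in\mathbb{R}$. The metric is $D(u,v)=\sup_{\alpha\in[0,1]}\max\{|u^-_\alpha-v^-_\alpha|,|u^+_\alpha-v^+_\alpha|\}$. A series $\sum u_n$ of fuzzy numbers is $E_p$ summable to $\nu$ if its sequence of partial sums $(s_n)$ has Euler means $\frac{1}{(p+1)^n}\sum_{k=0}^n\binom{n}{k}p^{n-k}s_k$ converging to $\nu$ in $D$. *)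

(* Defs.v *)
From HB Require Import structures.
From mathcomp Require Import all_boot all_order all_algebra.
From mathcomp Require Import all_classical all_reals all_analysis.
Set Implicit Arguments. Unset Strict Implicit. Unset Printing Implicit Defensive.
Import Order.TTheory GRing.Theory Num.Theory.
Import numFieldNormedType.Exports.
Local Open Scope classical_set_scope.
Local Open Scope ring_scope.

Section Fuzzy.
Variable R : realType.

Definition level (u : R -> R) (a : R) : set R :=
  if a == 0 then closure [set t | 0 < u t] else [set t | a <= u t].

Definition lend (u : R -> R) (a : R) : R := inf (level u a).
Definition rend (u : R -> R) (a : R) : R := sup (level u a).

Definition is_fuzzy (u : R -> R) : Prop :=
  [/\ (forall t, 0 <= u t <= 1),
      (exists t, u t = 1),
      (forall x y l, 0 <= l <= 1 ->
          Num.min (u x) (u y) <= u (l * x + (1 - l) * y)),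
      (forall t e, 0 < e -> \forall s \near t, u s < u t + e) &
      compact (closure [set t | 0 < u t])].

(* levelwise addition: the fuzzy number whose a-level is [u]_a + [v]_a *)
Definition fadd (u v : R -> R) : R -> R := fun t =>
  sup ([set 0] `|` [set a | 0 <= a <= 1 /\
         exists x y, level u a x /\ level v a y /\ t = x + y]).

(* levelwise scalar multiplication: a-level k[u]_a *)
Definition fscale (k : R) (u : R -> R) : R -> R := fun t =>
  sup ([set 0] `|` [set a | 0 <= a <= 1 /\
         exists x, level u a x /\ t = k * x]).

Definition fdist (u v : R -> R) : R :=
  sup [set d | exists a, 0 <= a <= 1 /\
         d = Num.max `|lend u a - lend v a| `|rend u a - rend v a|].

Fixpoint fsum (f : nat -> R -> R) (n : nat) : R -> R :=
  match n with
  | 0 => f 0%N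
  | m.+1 => fadd (fsum f m) (f m.+1)
  end.

Definition euler_mean (p : R) (s : nat -> R -> R) (n : nat) : R -> R :=
  fscale ((p + 1) ^- n)
    (fsum (fun k => fscale ('C(n, k)%:R * p ^+ (n - k)) (s k)) n).

End Fuzzy.

(* Main.v *)
Require Import Defs.
From HB Require Import structures.
From mathcomp Require Import all_boot all_order all_algebra.
From mathcomp Require Import all_classical all_reals all_analysis.
From mathcomp Require Import ring lra zify.
Set Implicit Arguments. Unset Strict Implicit. Unset Printing Implicit Defensive.
Import Order.TTheory GRing.Theory Num.Theory.
Import numFieldNormedType.Exports.
Local Open Scope classical_set_scope.
Local Open Scope ring_scope.

Section Gen.
Variable R : realType.
Implicit Types (L U : R -> R).

Definition itv (l r : R) : set R := [set t | l <= t <= r].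

Definition Pgood L U : Prop :=
 [/\ forall a, 0 <= a <= 1 -> L a <= U a,
     forall a b, 0 <= a -> a <= b -> b <= 1 -> L a <= L b /\ U b <= U a,
     forall a e, 0 < a <= 1 -> 0 < e ->
        exists b, [/\ 0 <= b, b < a, L a - e < L b & U b < U a + e]
   & forall e, 0 < e -> exists b, [/\ 0 < b, b <= 1, L b < L 0 + e & U 0 - e < U b]].

Lemma inf_itv l r : l <= r -> inf (itv l r) = l.
Proof.
move=> lr; apply/eqP; rewrite eq_le; apply/andP; split.
  apply: ge_inf; first by exists l => t /andP[].
  by rewrite /itv /= lexx lr.
by apply: lb_le_inf; [exists l; rewrite /itv /= lexx lr | move=> t /andP[]].
Qed.

Lemma sup_itv l r : l <= r -> sup (itv l r) = r.
Proof.
move=> lr; apply/eqP; rewrite eq_le; apply/andP; split.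
  by apply: ge_sup; [exists l; rewrite /itv /= lexx lr | move=> t /andP[]].
apply: ub_le_sup; first by exists r => t /andP[].
by rewrite /itv /= lexx lr.
Qed.

Lemma closed_itv' l r : closed (itv l r).
Proof.
have -> : itv l r = [set t | l <= t] `&` [set t | t <= r].
  by apply/seteqP; split => t; rewrite /itv /setI /=; [case/andP | case=> -> ->].
by apply: closedI; [exact: closed_ge | exact: closed_le].
Qed.

Lemma closure_nested L U l r :
 (forall b, 0 < b <= 1 -> [/\ l <= L b, L b <= U b & U b <= r]) ->
 (forall e, 0 < e -> exists b, [/\ 0 < b, b <= 1, L b < l + e & r - e < U b]) ->
 closure [set t | exists b, 0 < b <= 1 /\ L b <= t <= U b] = itv l r.
Proof.
move=> H1 H2; apply/seteqP; split.
  move=> t ht; apply: (closed_itv' (l:=l) (r:=r)); move: t ht.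
  apply: closureS => t [b [/H1 [h1 h2 h3] /andP[t1 t2]]].
  by rewrite /itv /=; apply/andP; split; lra.
move=> t /andP[lt tr] B /nbhs_ballP [e e0 BE].
have [b [b0 b1 Lb Ub]] := H2 e e0.
have := H1 b; rewrite b0 b1 => /(_ isT) [h1 h2 h3].
have bb : 0 < b <= 1 by rewrite b0 b1.
have [tL|Lt] := ltP t (L b).
  exists (L b); split; first by exists b; split => //; rewrite lexx h2.
  apply: BE; rewrite -ball_normE /= ltr_norml; apply/andP; split; lra.
have [Ut|tU] := ltP (U b) t.
  exists (U b); split; first by exists b; split => //; rewrite lexx h2.
  apply: BE; rewrite -ball_normE /= ltr_norml; apply/andP; split; lra.
exists t; split; first by exists b; split => //; rewrite Lt tU.
by apply: BE; apply: ballxx.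
Qed.

Definition genS L U t : set R := [set 0] `|` [set a | 0 <= a <= 1 /\ L a <= t <= U a].
Definition gen L U : R -> R := fun t => sup (genS L U t).

Lemma genS_ne L U t : genS L U t !=set0.
Proof. by exists 0; left. Qed.

Lemma genS_ub L U t : ubound (genS L U t) 1.
Proof. by move=> y [->|[/andP[_ ->]]]. Qed.

Lemma genS_hub L U t : has_ubound (genS L U t).
Proof. by exists 1; apply: genS_ub. Qed.

Lemma gen_level L U : Pgood L U -> forall a, 0 <= a <= 1 ->
  level (gen L U) a = itv (L a) (U a).
Proof.
move=> [HLU Hmon Hlc Hrc] a /andP[a0 a1].
have [->|an0] := eqVneq a 0.
  rewrite /level eqxx.
  have -> : [set t | 0 < gen L U t] =
            [set t | exists b, 0 < b <= 1 /\ L b <= t <= U b].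
    apply/seteqP; split => t /=.
      move=> /(sup_gt (genS_ne L U t)) [y [->|[/andP[y0 y1] yt]] ygt].
        by rewrite ltxx in ygt.
      by exists y; rewrite ygt y1.
    move=> [b [/andP[b0 b1] bt]]; apply: (lt_le_trans b0).
    by apply: ub_le_sup; [exact: genS_hub | right; split => //; rewrite (ltW b0) b1].
  apply: closure_nested.
    move=> b /andP[b0 b1]; have [h1 h2] := Hmon 0 b (lexx 0) (ltW b0) b1.
    by split => //; apply: HLU; rewrite (ltW b0) b1.
  exact: Hrc.
have apos : 0 < a by rewrite lt_def an0 a0.
have aa : 0 < a <= 1 by rewrite apos a1.
rewrite /level (negPf an0); apply/seteqP; split => t /=; last first.
  move=> /andP[h1 h2]; apply: ub_le_sup; first exact: genS_hub.
  by right; split; [rewrite a0 a1 | rewrite h1 h2].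
move=> ale; rewrite /itv /= !leNgt -negb_or; apply/negP => tout.
have [b [b0 ba key]] : exists b, [/\ 0 <= b, b < a &
    forall c, b <= c -> c <= 1 -> ~ (L c <= t <= U c)].
  case/orP: tout => [tL|Ut].
    have [b [b0 ba Lb Ub]] := Hlc a (L a - t) aa (ltac:(lra)).
    exists b; split => // c bc c1 /andP[Lc _].
    have [+ _] := Hmon b c b0 bc c1; lra.
  have [b [b0 ba Lb Ub]] := Hlc a (t - U a) aa (ltac:(lra)).
  exists b; split => // c bc c1 /andP[_ Uc].
  have [_ +] := Hmon b c b0 bc c1; lra.
have : gen L U t <= b.
  apply: ge_sup; first exact: genS_ne.
  move=> y [->//|[/andP[y0 y1] yt]].
  by case: (leP y b) => // /ltW yb; exfalso; apply: (key y).
lra.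
Qed.


Definition good (u : R -> R) := Pgood (lend u) (rend u) /\
  forall a, 0 <= a <= 1 -> level u a = itv (lend u a) (rend u a).

Lemma Pgood_ext L U L' U' : (forall a, 0 <= a <= 1 -> L a = L' a /\ U a = U' a) ->
  Pgood L U -> Pgood L' U'.
Proof.
move=> E [H1 H2 H3 H4]; split.
- by move=> a ha; have [<- <-] := E a ha; exact: H1.
- move=> a b a0 ab b1; have ha : 0 <= a <= 1 by rewrite a0 (le_trans ab b1).
  have hb : 0 <= b <= 1 by rewrite (le_trans a0 ab) b1.
  by have [<- <-] := E a ha; have [<- <-] := E b hb; exact: H2.
- move=> a e /andP[a0 a1] e0; have ha : 0 <= a <= 1 by rewrite (ltW a0) a1.
  have [b [b0 ba h h']] := H3 a e (ltac:(by rewrite a0 a1)) e0.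
  have hb : 0 <= b <= 1 by rewrite b0 (le_trans (ltW ba) a1).
  exists b; have [<- <-] := E a ha; have [<- <-] := E b hb; by split.
- move=> e e0; have [b [b0 b1 h h']] := H4 e e0.
  have hb : 0 <= b <= 1 by rewrite (ltW b0) b1.
  have h0 : 0 <= (0:R) <= 1 by rewrite lexx ler01.
  exists b; have [<- <-] := E 0 h0; have [<- <-] := E b hb; by split.
Qed.

Lemma good_gen L U : Pgood L U -> good (gen L U) /\
  forall a, 0 <= a <= 1 -> lend (gen L U) a = L a /\ rend (gen L U) a = U a.
Proof.
move=> PG; have E : forall a, 0 <= a <= 1 ->
    lend (gen L U) a = L a /\ rend (gen L U) a = U a.
  move=> a ha; have [H1 _ _ _] := PG.
  by rewrite /lend /rend gen_level // inf_itv ?sup_itv //; apply: H1.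
split => //; split.
  by apply: Pgood_ext PG => a /E [-> ->].
by move=> a ha; rewrite gen_level //; have [-> ->] := E a ha.
Qed.

Lemma Pgood_add L1 U1 L2 U2 : Pgood L1 U1 -> Pgood L2 U2 ->
  Pgood (fun a => L1 a + L2 a) (fun a => U1 a + U2 a).
Proof.
move=> [A1 B1 C1 D1] [A2 B2 C2 D2]; split.
- by move=> a ha; apply: lerD; [apply: A1 | apply: A2].
- move=> a b a0 ab b1; have [h1 h2] := B1 a b a0 ab b1.
  have [h3 h4] := B2 a b a0 ab b1; split; exact: lerD.
- move=> a e ha e0; have e2 : 0 < e / 2 by rewrite divr_gt0.
  have [a0 a1] : 0 < a /\ a <= 1 by case/andP: ha.
  have [b [b0 ba h1 h2]] := C1 a (e/2) ha e2.
  have [c [c0 ca h3 h4]] := C2 a (e/2) ha e2.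
  have ee : e = e / 2 + e / 2 by rewrite -splitr.
  have [bc|cb] := leP b c.
    have [m1 m2] := B1 b c b0 bc (le_trans (ltW ca) a1).
    exists c; split => //; lra.
  have [m1 m2] := B2 c b c0 (ltW cb) (le_trans (ltW ba) a1).
  exists b; split => //; lra.
- move=> e e0; have e2 : 0 < e / 2 by rewrite divr_gt0.
  have [b [b0 b1 h1 h2]] := D1 (e/2) e2.
  have [c [c0 c1 h3 h4]] := D2 (e/2) e2.
  have ee : e = e / 2 + e / 2 by rewrite -splitr.
  have [bc|cb] := leP b c.
    have [m1 m2] := B2 b c (ltW b0) bc c1.
    exists b; split => //; lra.
  have [m1 m2] := B1 c b (ltW c0) (ltW cb) b1.
  exists c; split => //; lra.
Qed.

Lemma Pgood_scale L U k : 0 <= k -> Pgood L U ->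
  Pgood (fun a => k * L a) (fun a => k * U a).
Proof.
move=> k0 [A B C D]; split.
- by move=> a ha; apply: ler_wpM2l => //; apply: A.
- move=> a b a0 ab b1; have [h1 h2] := B a b a0 ab b1.
  by split; apply: ler_wpM2l.
- move=> a e ha e0; have k1 : 0 < k + 1 by lra.
  have e2 : 0 < e / (k + 1) by rewrite divr_gt0.
  have [b [b0 ba h1 h2]] := C a (e / (k + 1)) ha e2.
  have ke : k * (e / (k + 1)) < e.
    rewrite mulrA ltr_pdivrMr // mulrDr mulr1; lra.
  exists b; split => //.
    have : k * (L a - e / (k + 1)) <= k * L b by apply: ler_wpM2l => //; lra.
    rewrite mulrBr; lra.
  have : k * U b <= k * (U a + e / (k + 1)) by apply: ler_wpM2l => //; lra.
  rewrite mulrDr; lra.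
- move=> e e0; have k1 : 0 < k + 1 by lra.
  have e2 : 0 < e / (k + 1) by rewrite divr_gt0.
  have [b [b0 b1 h1 h2]] := D (e / (k + 1)) e2.
  have ke : k * (e / (k + 1)) < e.
    rewrite mulrA ltr_pdivrMr // mulrDr mulr1; lra.
  exists b; split => //.
    have : k * L b <= k * (L 0 + e / (k + 1)) by apply: ler_wpM2l => //; lra.
    rewrite mulrDr; lra.
  have : k * (U 0 - e / (k + 1)) <= k * U b by apply: ler_wpM2l => //; lra.
  rewrite mulrBr; lra.
Qed.

Lemma fadd_gen u v : good u -> good v -> fadd u v =
  gen (fun a => lend u a + lend v a) (fun a => rend u a + rend v a).
Proof.
move=> [[Au _ _ _] Lu] [[Av _ _ _] Lv]; apply/funext => t.
rewrite /fadd /gen /genS; congr (sup (_ `|` _)).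
apply/seteqP; split => a /= [ha H]; split => //.
  case: H => x [y [hx [hy ->]]].
  move: hx hy; rewrite Lu // Lv // /itv /= => /andP[x1 x2] /andP[y1 y2].
  by apply/andP; split; lra.
have h1 := Au a ha; have h2 := Av a ha.
case/andP: H => t1 t2.
have [c|c] := leP (lend u a) (t - rend v a).
  exists (t - rend v a), (rend v a); rewrite Lu // Lv // /itv /=.
  by split; [apply/andP; split; lra | split; [apply/andP; split; lra | lra]].
exists (lend u a), (t - lend u a); rewrite Lu // Lv // /itv /=.
by split; [apply/andP; split; lra | split; [apply/andP; split; lra | lra]].
Qed.

Lemma fadd_good u v : good u -> good v -> good (fadd u v) /\
  forall a, 0 <= a <= 1 -> lend (fadd u v) a = lend u a + lend v a /\
                           rend (fadd u v) a = rend u a + rend v a.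
Proof.
move=> gu gv; rewrite fadd_gen //; apply: good_gen.
by apply: Pgood_add; [case: gu | case: gv].
Qed.

Lemma fscale_gen k u : 0 <= k -> good u -> fscale k u =
  gen (fun a => k * lend u a) (fun a => k * rend u a).
Proof.
move=> k0 [[Au _ _ _] Lu]; apply/funext => t.
rewrite /fscale /gen /genS; congr (sup (_ `|` _)).
apply/seteqP; split => a /= [ha H]; split => //.
  case: H => x [hx ->].
  move: hx; rewrite Lu // /itv /= => /andP[x1 x2].
  by apply/andP; split; apply: ler_wpM2l.
have h1 := Au a ha.
case/andP: H => t1 t2.
have [kz|kn0] := eqVneq k 0.
  rewrite kz !mul0r in t1 t2.
  exists (lend u a); rewrite Lu // /itv /= lexx h1 kz mul0r; split => //.
  by apply/eqP; rewrite eq_le t1 t2.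
have kp : 0 < k by rewrite lt_def kn0 k0.
exists (t / k); rewrite Lu // /itv /=; split; last by rewrite mulrC divfK.
by rewrite ler_pdivlMr // ler_pdivrMr // ![_ * k]mulrC t1 t2.
Qed.

Lemma fscale_good k u : 0 <= k -> good u -> good (fscale k u) /\
  forall a, 0 <= a <= 1 -> lend (fscale k u) a = k * lend u a /\
                           rend (fscale k u) a = k * rend u a.
Proof.
move=> k0 gu; rewrite fscale_gen //; apply: good_gen.
by apply: Pgood_scale => //; case: gu.
Qed.

Lemma closed_inf_in (A : set R) : closed A -> A !=set0 -> has_lbound A -> A (inf A).
Proof.
move=> cA A0 lA; rewrite closedE in cA; apply: cA => hn.
have [e e0 He] : exists2 e : R, 0 < e & forall s, `|inf A - s| < e -> ~ A s.
  move: hn; rewrite -nbhs_nearE => /nbhs_ballP [e e0 H].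
  by exists e => // s hs; apply: H; rewrite -ball_normE.
have [s As sl] := inf_adherent e0 (conj A0 lA).
apply: (He s) => //; have := ge_inf lA As; rewrite ltr_norml; move=> h.
by apply/andP; split; lra.
Qed.

Lemma closed_sup_in (A : set R) : closed A -> A !=set0 -> has_ubound A -> A (sup A).
Proof.
move=> cA A0 uA; rewrite closedE in cA; apply: cA => hn.
have [e e0 He] : exists2 e : R, 0 < e & forall s, `|sup A - s| < e -> ~ A s.
  move: hn; rewrite -nbhs_nearE => /nbhs_ballP [e e0 H].
  by exists e => // s hs; apply: H; rewrite -ball_normE.
have [s As sl] := sup_adherent e0 (conj A0 uA).
apply: (He s) => //; have := ub_le_sup uA As; rewrite ltr_norml; move=> h.
by apply/andP; split; lra.
Qed.

Lemma itv_sub l r l' r' : l <= r -> itv l r `<=` itv l' r' -> l' <= l /\ r <= r'.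
Proof.
move=> lr H; have /H /andP[h1 h2] : itv l r l by rewrite /itv /= lexx lr.
have /H /andP[h3 h4] : itv l r r by rewrite /itv /= lexx lr.
by [].
Qed.

Lemma ge_of_lt (x a : R) : 0 <= x -> 0 < a -> (forall b, 0 < b < a -> b <= x) -> a <= x.
Proof.
move=> x0 a0 H; rewrite leNgt; apply/negP => xa.
have := H ((x + a) / 2); rewrite !(ltr_pdivrMr, ltr_pdivlMr, ler_pdivrMr) //.
move=> /(_ ltac:(apply/andP; split; lra)); lra.
Qed.

End Gen.

Section Fz.
Variable R : realType.
Variable u : R -> R.
Hypothesis hu : is_fuzzy u.

Lemma fz_bound : exists M : R, forall t, 0 < u t -> `|t| <= M.
Proof.
case: hu => _ _ _ _ hc; have := compact_bounded hc.
case=> M [_ HM]; exists (M + 1) => t ht.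
have := HM (M + 1) ltac:(by rewrite ltrDl); apply; exact: subset_closure.
Qed.

Lemma fz_levelE a : 0 < a -> level u a = [set t | a <= u t].
Proof. by move=> a0; rewrite /level gt_eqF. Qed.

Lemma fz_closed a : closed [set t | a <= u t].
Proof.
case: hu => _ _ _ husc _.
rewrite closedE => p hp; rewrite /= leNgt; apply/negP => upa; apply: hp.
have := husc p (a - u p); rewrite subr_gt0 => /(_ upa).
by apply: filterS => s /= h1 h2; lra.
Qed.

Lemma fz_level_pos a : 0 < a <= 1 ->
  level u a = itv (lend u a) (rend u a) /\ lend u a <= rend u a.
Proof.
move=> /andP[a0 a1]; case: hu => h01 [t1 ht1] hconv _ _.
rewrite /lend /rend fz_levelE //.
set S := [set t | a <= u t].
have S0 : S !=set0 by exists t1; rewrite /S /= ht1.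
have [M HM] := fz_bound.
have lS : has_lbound S.
  exists (- M) => t /= at1; have := HM t (lt_le_trans a0 at1).
  by rewrite ler_norml => /andP[].
have uS : has_ubound S.
  exists M => t /= at1; have := HM t (lt_le_trans a0 at1).
  by rewrite ler_norml => /andP[].
have li := closed_inf_in (fz_closed (a:=a)) S0 lS.
have si := closed_sup_in (fz_closed (a:=a)) S0 uS.
have lr : inf S <= sup S by exact: ge_inf lS _ si.
split => //; apply/seteqP; split => t.
  by move=> St; rewrite /itv /= (ge_inf lS St) (ub_le_sup uS St).
move=> /andP[t1' t2']; rewrite /S /=.
have [e|ne] := eqVneq (inf S) (sup S).
  have -> : t = inf S by apply/eqP; rewrite eq_le t1' andbT e.
  exact: li.
have d0 : sup S - inf S != 0 by rewrite subr_eq0 eq_sym.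
have dp : 0 < sup S - inf S by rewrite subr_gt0 lt_def eq_sym ne lr.
pose l := (sup S - t) / (sup S - inf S).
have l01 : 0 <= l <= 1.
  rewrite /l divr_ge0 ?subr_ge0 //= ler_pdivrMr // mul1r; lra.
have := hconv (inf S) (sup S) l l01.
have -> : l * inf S + (1 - l) * sup S = t.
  by rewrite /l; field.
apply: le_trans; rewrite le_min; apply/andP; split; [exact: li | exact: si].
Qed.

Lemma fz_mono a b : 0 < a -> a <= b -> b <= 1 ->
  lend u a <= lend u b /\ rend u b <= rend u a.
Proof.
move=> a0 ab b1; have b0 := lt_le_trans a0 ab.
have [Ea _] := fz_level_pos (ltac:(by rewrite a0 (le_trans ab b1)) : 0 < a <= 1).
have [Eb lrb] := fz_level_pos (ltac:(by rewrite b0 b1) : 0 < b <= 1).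
apply: itv_sub lrb _; rewrite -Ea -Eb !fz_levelE // => t /=.
exact: le_trans.
Qed.

Lemma fz_in a t : 0 < a <= 1 -> lend u a <= t <= rend u a -> a <= u t.
Proof.
move=> ha ht; have [E _] := fz_level_pos ha.
have : level u a t by rewrite E.
by case/andP: ha => a0 _; rewrite fz_levelE.
Qed.

Definition P01 : set R := [set b | 0 < b <= 1].
Definition l0 := inf (lend u @` P01).
Definition r0 := sup (rend u @` P01).

Lemma fz_lb : exists M, forall b, 0 < b <= 1 -> - M <= lend u b /\ rend u b <= M.
Proof.
have [M HM] := fz_bound; exists M => b hb; have [_ lr] := fz_level_pos hb.
have /andP[b0 _] := hb.
have h1 := fz_in hb (ltac:(by rewrite lexx lr) : lend u b <= lend u b <= rend u b).
have h2 := fz_in hb (ltac:(by rewrite lexx lr) : lend u b <= rend u b <= rend u b).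
have := HM _ (lt_le_trans b0 h1); have := HM _ (lt_le_trans b0 h2).
rewrite !ler_norml => /andP[_ ->] /andP[-> _]; by [].
Qed.

Lemma fz_hlb : has_lbound (lend u @` P01).
Proof. by have [M HM] := fz_lb; exists (- M) => _ [b hb <-]; case: (HM b hb). Qed.

Lemma fz_hub : has_ubound (rend u @` P01).
Proof. by have [M HM] := fz_lb; exists M => _ [b hb <-]; case: (HM b hb). Qed.

Lemma fz_approx e : 0 < e -> exists b, [/\ 0 < b, b <= 1, lend u b < l0 + e & r0 - e < rend u b].
Proof.
move=> e0.
have n1 : lend u @` P01 !=set0 by exists (lend u 1), 1 => //; rewrite /P01 /= ltr01 lexx.
have n2 : rend u @` P01 !=set0 by exists (rend u 1), 1 => //; rewrite /P01 /= ltr01 lexx.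
have [_ [b1 /andP[b10 b11] <-] h1] := inf_adherent e0 (conj n1 fz_hlb).
have [_ [b2 /andP[b20 b21] <-] h2] := sup_adherent e0 (conj n2 fz_hub).
rewrite -/l0 in h1; rewrite -/r0 in h2.
have [b12|b21'] := leP b1 b2.
  have [m1 m2] := fz_mono b10 b12 b21.
  by exists b1; split => //; lra.
have [m1 m2] := fz_mono b20 (ltW b21') b11.
by exists b2; split => //; lra.
Qed.

Lemma fz_in_bounds b : 0 < b <= 1 -> [/\ l0 <= lend u b, lend u b <= rend u b & rend u b <= r0].
Proof.
move=> hb; split.
- by apply: ge_inf; [exact: fz_hlb | exists b].
- by have [] := fz_level_pos hb.
- by apply: ub_le_sup; [exact: fz_hub | exists b].
Qed.

Lemma fz_l0r0 : l0 <= r0.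
Proof.
have h : 0 < (1:R) <= 1 by rewrite ltr01 lexx.
by have [h1 h2 h3] := fz_in_bounds h; apply: le_trans h1 (le_trans h2 h3).
Qed.

Lemma fz_level0 : level u 0 = itv l0 r0.
Proof.
rewrite /level eqxx.
have -> : [set t | 0 < u t] =
          [set t | exists b, 0 < b <= 1 /\ lend u b <= t <= rend u b].
  apply/seteqP; split => t /=.
    move=> ht; exists (u t); have hb : 0 < u t <= 1.
      by case: hu => h01 _ _ _ _; have /andP[_ ->] := h01 t; rewrite ht.
    split => //; have [E _] := fz_level_pos hb.
    have : level u (u t) t by rewrite fz_levelE //=.
    by rewrite E.
  move=> [b [hb ht]]; have /andP[b0 _] := hb.
  exact: lt_le_trans b0 (fz_in hb ht).
apply: closure_nested; first exact: fz_in_bounds.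
exact: fz_approx.
Qed.

Lemma fz_end0 : lend u 0 = l0 /\ rend u 0 = r0.
Proof. by rewrite /lend /rend fz_level0 inf_itv ?sup_itv //; exact: fz_l0r0. Qed.

Lemma fz_lc a e : 0 < a <= 1 -> 0 < e ->
  exists b, [/\ 0 <= b, b < a, lend u a - e < lend u b & rend u b < rend u a + e].
Proof.
move=> ha e0; have /andP[a0 a1] := ha.
have [Ea lra] := fz_level_pos ha.
pose Q := [set b : R | 0 < b < a].
have a2 : Q (a / 2).
  by rewrite /Q /= divr_gt0 //= ltr_pdivrMr // mulrDr mulr1; lra.
have Qb b : Q b -> 0 < b <= 1.
  by move=> /andP[b0 ba]; rewrite b0 (le_trans (ltW ba) a1).
have ulm : forall t, (forall b, Q b -> b <= u t) -> lend u a <= t <= rend u a.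
  move=> t H; suff : itv (lend u a) (rend u a) t by [].
  rewrite -Ea fz_levelE //=.
  case: hu => h01 _ _ _ _; have /andP[ut0 _] := h01 t.
  by apply: ge_of_lt => // b hb; apply: H.
have nL : lend u @` Q !=set0 by exists (lend u (a/2)), (a/2).
have uL : has_ubound (lend u @` Q).
  exists (lend u a) => _ [b /andP[b0 ba] <-]; by have [] := fz_mono b0 (ltW ba) a1.
have nU : rend u @` Q !=set0 by exists (rend u (a/2)), (a/2).
have lU : has_lbound (rend u @` Q).
  exists (rend u a) => _ [b /andP[b0 ba] <-]; by have [] := fz_mono b0 (ltW ba) a1.
set m := sup (lend u @` Q); set m' := inf (rend u @` Q).
have hm : lend u a <= m.
  suff : lend u a <= m <= rend u a by case/andP.
  apply: ulm => b hb; apply: (fz_in (Qb b hb)); apply/andP; split.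
    by apply: ub_le_sup => //; exists b.
  have /andP[b0 ba] := hb; have [_ h] := fz_mono b0 (ltW ba) a1.
  apply: le_trans h; apply: le_trans lra; apply: ge_sup => //.
  by move=> _ [c /andP[c0 ca] <-]; have [] := fz_mono c0 (ltW ca) a1.
have hm' : m' <= rend u a.
  suff : lend u a <= m' <= rend u a by case/andP.
  apply: ulm => b hb; apply: (fz_in (Qb b hb)); apply/andP; split; last first.
    by apply: ge_inf => //; exists b.
  have /andP[b0 ba] := hb; have [h _] := fz_mono b0 (ltW ba) a1.
  apply: le_trans h _; apply: le_trans lra _; apply: lb_le_inf => //.
  by move=> _ [c /andP[c0 ca] <-]; have [] := fz_mono c0 (ltW ca) a1.
have [_ [b1 /andP[b10 b1a] <-] h1] := sup_adherent e0 (conj nL uL).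
have [_ [b2 /andP[b20 b2a] <-] h2] := inf_adherent e0 (conj nU lU).
rewrite -/m in h1; rewrite -/m' in h2.
have [b12|b21] := leP b1 b2.
  have [m1 m2] := fz_mono b10 b12 (le_trans (ltW b2a) a1).
  by exists b2; split => //; [exact: ltW | lra | lra].
have [m1 m2] := fz_mono b20 (ltW b21) (le_trans (ltW b1a) a1).
by exists b1; split => //; [exact: ltW | lra | lra].
Qed.

Lemma fz_good : good u.
Proof.
have [E0l E0r] := fz_end0.
have h0 : lend u 0 <= rend u 0 by rewrite E0l E0r fz_l0r0.
split; last first.
  move=> a /andP[a0 a1]; have [->|an0] := eqVneq a 0.
    by rewrite fz_level0 E0l E0r.
  have apos : 0 < a by rewrite lt_def an0 a0.
  by have [] := fz_level_pos (ltac:(by rewrite apos a1) : 0 < a <= 1).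
split.
- move=> a /andP[a0 a1]; have [->|an0] := eqVneq a 0; first exact: h0.
  have apos : 0 < a by rewrite lt_def an0 a0.
  by have [] := fz_level_pos (ltac:(by rewrite apos a1) : 0 < a <= 1).
- move=> a b a0 ab b1; have [az|an0] := eqVneq a 0.
    rewrite az in ab *; have [bz|bn0] := eqVneq b 0; first by rewrite bz.
    have bpos : 0 < b by rewrite lt_def bn0 ab.
    have [h1 _ h3] := fz_in_bounds (ltac:(by rewrite bpos b1) : 0 < b <= 1).
    by rewrite E0l E0r.
  have apos : 0 < a by rewrite lt_def an0 a0.
  exact: fz_mono.
- move=> a e ha e0; exact: fz_lc.
- move=> e e0; rewrite E0l E0r; exact: fz_approx.
Qed.

End Fz.

Section Dist.
Variable R : realType.

Lemma fsum_good (f : nat -> R -> R) : (forall k, good (f k)) -> forall n,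
  good (fsum f n) /\ forall a, 0 <= a <= 1 ->
    lend (fsum f n) a = \sum_(k < n.+1) lend (f k) a /\
    rend (fsum f n) a = \sum_(k < n.+1) rend (f k) a.
Proof.
move=> gf; elim=> [|n [gn En]] /=.
  by split => // a _; rewrite !big_ord_recr /= !big_ord0 !add0r.
have [g E] := fadd_good gn (gf n.+1); split => // a ha.
have [e1 e2] := En a ha; have [e3 e4] := E a ha.
by rewrite e3 e4 e1 e2 (big_ord_recr n.+1) (big_ord_recr n.+1 (fun k => rend (f k) a)).
Qed.

Lemma euler_good (p : R) (s : nat -> R -> R) n : 0 <= p -> (forall k, good (s k)) ->
  good (euler_mean p s n) /\ forall a, 0 <= a <= 1 ->
    lend (euler_mean p s n) a = (p + 1) ^- n *
        \sum_(k < n.+1) ('C(n, k)%:R * p ^+ (n - k)) * lend (s k) a /\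
    rend (euler_mean p s n) a = (p + 1) ^- n *
        \sum_(k < n.+1) ('C(n, k)%:R * p ^+ (n - k)) * rend (s k) a.
Proof.
move=> p0 gs.
have c0 k : 0 <= 'C(n, k)%:R * p ^+ (n - k) by rewrite mulr_ge0 // exprn_ge0.
have gg : forall k, good (fscale ('C(n, k)%:R * p ^+ (n - k)) (s k)).
  by move=> k; have [] := fscale_good (c0 k) (gs k).
have [gsum Esum] := fsum_good gg n.
have cn : 0 <= (p + 1) ^- n by rewrite invr_ge0 exprn_ge0 // addr_ge0.
have [ge Ee] := fscale_good cn gsum.
split => // a ha; rewrite /euler_mean.
have [e1 e2] := Ee a ha; have [e3 e4] := Esum a ha.
rewrite e1 e2 e3 e4; split; congr (_ * _); apply: eq_bigr => k _;
  by have [E1 E2] := (fscale_good (c0 k) (gs k)).2 a ha; rewrite ?E1 ?E2.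
Qed.

Definition dset (u v : R -> R) := [set d | exists a, 0 <= a <= 1 /\
         d = Num.max `|lend u a - lend v a| `|rend u a - rend v a|].

Lemma dset_ub (u v : R -> R) : good u -> good v -> has_ubound (dset u v).
Proof.
move=> [[_ mu _ _] _] [[_ mv _ _] _].
have h0 : (0:R) <= 0 by [].
have h1 : (0:R) <= 1 by exact: ler01.
exists (`|lend u 0| + `|lend u 1| + `|rend u 0| + `|rend u 1| +
        `|lend v 0| + `|lend v 1| + `|rend v 0| + `|rend v 1|).
move=> _ [a [/andP[a0 a1] ->]].
have [x1 x2] := mu 0 a h0 a0 a1; have [x3 x4] := mu a 1 a0 a1 (lexx _).
have [y1 y2] := mv 0 a h0 a0 a1; have [y3 y4] := mv a 1 a0 a1 (lexx _).
have nb (l x r : R) : l <= x -> x <= r -> `|x| <= `|l| + `|r|.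
  move=> lx xr; rewrite ler_norml; apply/andP; split.
    have := ler_norm (- l); rewrite normrN; have := normr_ge0 r; lra.
  have := ler_norm r; have := normr_ge0 l; lra.
rewrite ge_max; apply/andP; split.
  apply: le_trans (ler_normB _ _) _.
  have := nb _ _ _ x1 x3; have := nb _ _ _ y1 y3.
  have := normr_ge0 (rend u 0); have := normr_ge0 (rend u 1).
  have := normr_ge0 (rend v 0); have := normr_ge0 (rend v 1). lra.
apply: le_trans (ler_normB _ _) _.
have := nb _ _ _ x4 x2; have := nb _ _ _ y4 y2.
have := normr_ge0 (lend u 0); have := normr_ge0 (lend u 1).
have := normr_ge0 (lend v 0); have := normr_ge0 (lend v 1). lra.
Qed.

Lemma fdist_ge (u v : R -> R) a : good u -> good v -> 0 <= a <= 1 ->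
  `|lend u a - lend v a| <= fdist u v /\ `|rend u a - rend v a| <= fdist u v.
Proof.
move=> gu gv ha.
have := ub_le_sup (dset_ub gu gv) (ltac:(by exists a; split) :
   dset u v (Num.max `|lend u a - lend v a| `|rend u a - rend v a|)).
by rewrite ge_max => /andP[].
Qed.

Lemma fdist_ge0 (u v : R -> R) : good u -> good v -> 0 <= fdist u v.
Proof.
move=> gu gv; have [h _] := fdist_ge gu gv (ltac:(by rewrite lexx ler01) : 0 <= (0:R) <= 1).
exact: le_trans (normr_ge0 _) h.
Qed.

Lemma fdist_le (u v : R -> R) c : (forall a, 0 <= a <= 1 ->
  `|lend u a - lend v a| <= c /\ `|rend u a - rend v a| <= c) -> fdist u v <= c.
Proof.
move=> H; apply: ge_sup.
  by exists (Num.max `|lend u 0 - lend v 0| `|rend u 0 - rend v 0|), 0; rewrite lexx ler01.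
move=> _ [a [ha ->]]; have [h1 h2] := H a ha; by rewrite ge_max h1 h2.
Qed.

End Dist.

Section Toep.
Variable R : realType.
Variable p : R.
Hypothesis p0 : 0 < p.

Definition W n k := (p + 1) ^- n * ('C(n, k)%:R * p ^+ (n - k)).

Lemma W_ge0 n k : 0 <= W n k.
Proof.
have pp : 0 <= p by exact: ltW.
have p1 : 0 <= p + 1 by lra.
by rewrite /W !mulr_ge0 // ?invr_ge0 exprn_ge0.
Qed.

Lemma binE n : (p + 1) ^+ n = \sum_(k < n.+1) 'C(n, k)%:R * p ^+ (n - k).
Proof.
rewrite exprDn; apply: eq_bigr => k _; by rewrite expr1n mulr1 mulr_natl.
Qed.

Lemma W_sum n : \sum_(k < n.+1) W n k = 1.
Proof.
rewrite /W -mulr_sumr -binE mulVf // expf_neq0 //.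
by rewrite gt_eqF // addr_gt0.
Qed.

Lemma W_small n k : (k < n)%N -> W n k * (n - k)%:R <= p * (k.+1)%:R.
Proof.
move=> kn; rewrite /W.
have pn : 0 < (p + 1) ^+ n by rewrite exprn_gt0 // addr_gt0.
rewrite -mulrA ler_pdivrMl //.
have -> : 'C(n, k)%:R * p ^+ (n - k) * (n - k)%:R =
          p * (k.+1)%:R * ('C(n, k.+1)%:R * p ^+ (n - k.+1)) :> R.
  have hnat : ('C(n, k) * (n - k))%N = (k.+1 * 'C(n, k.+1))%N.
    by rewrite mul_bin_left mulnC.
  have hp : p ^+ (n - k) = p * p ^+ (n - k.+1) by rewrite -(subnSK kn) exprS.
  rewrite hp; transitivity (('C(n, k) * (n - k))%N%:R * (p * p ^+ (n - k.+1)) : R).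
    by rewrite natrM; ring.
  by rewrite hnat natrM; ring.
rewrite [X in _ <= X]mulrC; apply: ler_wpM2l; first by rewrite mulr_ge0 // ltW.
rewrite binE (bigD1 (Ordinal (kn : (k.+1 < n.+1)%N))) //= lerDl.
by apply: sumr_ge0 => i _; rewrite mulr_ge0 // exprn_ge0 // ltW.
Qed.

Lemma sum_split (F : nat -> R) N m : (N <= m)%N ->
  \sum_(k < m) F k = \sum_(k < N) F k + \sum_(N <= k < m) F k.
Proof.
by move=> Nm; rewrite -!(big_mkord xpredT) (big_cat_nat (n:=N)).
Qed.

Lemma toeplitz (d : nat -> R) : (forall k, 0 <= d k) -> d @ \oo --> (0:R) ->
  (fun n => \sum_(k < n.+1) W n k * d k) @ \oo --> (0:R).
Proof.
move=> d0 hd; apply/cvgrPdist_le => e e0.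
have e2 : 0 < e / 2 by rewrite divr_gt0.
move/cvgrPdist_le: hd => /(_ _ e2) [N _ HN].
have dN k : (N <= k)%N -> d k <= e / 2.
  by move=> Nk; have := HN k Nk; rewrite sub0r normrN ger0_norm.
set K := \sum_(k < N) d k.
have K0 : 0 <= K by apply: sumr_ge0 => k _.
set X := 2 * p * N%:R * K / e.
set M := (Num.truncn X).+1.
have XM : X < M%:R by exact: truncnS_gt.
exists (N + M).+1 => // n /= Hn.
have S0 : 0 <= \sum_(k < n.+1) W n k * d k.
  by apply: sumr_ge0 => k _; rewrite mulr_ge0 // W_ge0.
rewrite sub0r normrN ger0_norm //.
have Nn : (N <= n.+1)%N by lia.
rewrite (sum_split (fun k => W n k * d k) Nn).
have P2 : \sum_(N <= k < n.+1) W n k * d k <= e / 2.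
  apply: le_trans (_ : \sum_(N <= k < n.+1) W n k * (e / 2) <= _).
    apply: ler_sum_nat => k /andP[Nk _]; apply: ler_wpM2l; first exact: W_ge0.
    exact: dN.
  rewrite -mulr_suml; rewrite -[leRHS]mul1r; apply: ler_wpM2r; first exact: ltW.
  rewrite -(W_sum n) (sum_split (W n) Nn) lerDr.
  by apply: sumr_ge0 => k _; exact: W_ge0.
have nN : (0:R) < (n - N)%:R by rewrite ltr0n; lia.
have P1 : (n - N)%:R * \sum_(k < N) W n k * d k <= p * N%:R * K.
  rewrite mulr_sumr /K mulr_sumr; apply: ler_sum => k _.
  rewrite mulrA; apply: ler_wpM2r => //.
  have kn : (k < n)%N by have := ltn_ord k; lia.
  apply: le_trans (_ : W n k * (n - k)%:R <= _).
    rewrite mulrC; apply: ler_wpM2l; first exact: W_ge0.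
    by rewrite ler_nat; have := ltn_ord k; lia.
  apply: le_trans (W_small kn) _; apply: ler_wpM2l; first exact: ltW.
  by rewrite ler_nat.
have P1' : p * N%:R * K <= (e / 2) * (n - N)%:R.
  have : X <= (n - N)%:R.
    apply: le_trans (ltW XM) _; rewrite ler_nat; lia.
  rewrite /X ler_pdivrMr // => h.
  have -> : e / 2 * (n - N)%:R = ((n - N)%:R * e) / 2 by rewrite mulrC mulrA.
  rewrite ler_pdivlMr //; lra.
have : \sum_(k < N) W n k * d k <= e / 2.
  rewrite -(ler_pM2l nN); apply: (le_trans P1); apply: (le_trans P1'); by rewrite mulrC.
lra.
Qed.

End Toep.

Lemma W_comb (R : realType) (p : R) n (f : nat -> R) (x : R) : 0 < p ->
  (p + 1) ^- n * \sum_(k < n.+1) ('C(n, k)%:R * p ^+ (n - k)) * f k - x =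
  \sum_(k < n.+1) W p n k * (f k - x).
Proof.
move=> p0; transitivity (\sum_(k < n.+1) W p n k * f k - (\sum_(k < n.+1) W p n k) * x).
  rewrite W_sum // mul1r mulr_sumr; congr (_ - _); apply: eq_bigr => k _.
  by rewrite /W mulrA.
by rewrite mulr_suml -sumrB; apply: eq_bigr => k _; rewrite mulrBr.
Qed.

Lemma comb_bound (R : realType) (p : R) n (f : nat -> R) (x : R) (d : nat -> R) : 0 < p ->
  (forall k, `|f k - x| <= d k) ->
  `|(p + 1) ^- n * \sum_(k < n.+1) ('C(n, k)%:R * p ^+ (n - k)) * f k - x|
    <= \sum_(k < n.+1) W p n k * d k.
Proof.
move=> p0 H; rewrite W_comb //; apply: le_trans (ler_norm_sum _ _ _) _.
apply: ler_sum => k _; rewrite normrM ger0_norm ?W_ge0 //.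
by apply: ler_wpM2l; [exact: W_ge0 | exact: H].
Qed.

Theorem mainTheorem4 (R : realType) (p : R) (u : nat -> R -> R) (nu : R -> R) :
  0 < p ->
  (forall n, is_fuzzy (u n)) ->
  is_fuzzy nu ->
  (fun n => fdist (fsum u n) nu) @ \oo --> (0 : R) ->
  (fun n => fdist (euler_mean p (fsum u) n) nu) @ \oo --> (0 : R).
Proof.
move=> p0 hu hnu hc.
have gu k : good (u k) by exact: fz_good.
have gnu : good nu by exact: fz_good.
have gs k : good (fsum u k) by exact: (fsum_good gu k).1.
pose d := fun k => fdist (fsum u k) nu.
have d0 k : 0 <= d k by exact: fdist_ge0.
have T := toeplitz p0 d0 hc.
apply/cvgrPdist_le => e e0; move/cvgrPdist_le: T => /(_ e e0).
apply: filterS => n; rewrite !sub0r !normrN => Hn.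
have [ge Ee] := euler_good n (ltW p0) gs.
rewrite ger0_norm; last exact: fdist_ge0.
apply: le_trans Hn; apply: le_trans (ler_norm _); apply: fdist_le => a ha.
have [e1 e2] := Ee a ha; rewrite e1 e2; split.
  apply: (@comb_bound R p n (fun k => lend (fsum u k) a) (lend nu a) d p0) => k.
  by have [] := fdist_ge (gs k) gnu ha.
apply: (@comb_bound R p n (fun k => rend (fsum u k) a) (rend nu a) d p0) => k.
by have [] := fdist_ge (gs k) gnu ha.
Qed.
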